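(* Let $0<\theta<\frac{\pi}{4}$ and let $N\ge 2$ be an integer. Let $|\psi_{\mathrm{GGHZ}}\rangle=\cos\theta|000\rangle+\sin\theta|111\rangle$ and $|\psi_{\mathrm{GHZ}}\rangle=\frac{1}{\sqrt2}(|000\rangle+|111\rangle)$ be three-qubit states on $\mathcal H_A\otimes\mathcal H_B\otimes\mathcal H_C$. For $x\in\{0,1,2\}$ and $a\in\{0,1\}$ let $P_{a|x}$ be the projector onto the eigenvector of $\sigma_x$ (if $x=0$), $\sigma_y$ (if $x=1$), $\sigma_z$ (if $x=2$) with eigenvalue $(-1)^a$. Define the assemblages on Charlie $$\sigma^{\mathrm{GGHZ}}_{a,b|x,y}=\mathrm{Tr}_{AB}\big[(P_{a|x}\otimes P_{b|y}\otimes\mathbb 1)|\psi_{\mathrm{GGHZ}}\rangle\langle\psi_{\mathrm{GGHZ}}|\big],\quad \sigma^{\mathrm{GHZ}}_{a,b|x,y}=\mathrm{Tr}_{AB}\big[(P_{a|x}\otimes P_{b|y}\otimes\mathbb 1)|\psi_{\mathrm{GHZ}}\rangle\langle\psi_{\mathrm{GHZ}}|\big]$$ for $a,b\in\{0,1\}$, $x,y\in\{0,1,2\}$. Let $P_{\mathrm{fail}}=(1-2\sin^2\theta)^{N-1}$, $P_{\mathrm{success}}=1-P_{\mathrm{fail}}$, and $\sigma^{\mathrm{dist}}_{a,b|x,y}=P_{\mathrm{success}}\,\sigma^{\mathrm{GHZ}}_{a,b|x,y}+P_{\mathrm{fail}}\,\sigma^{\mathrm{GGHZ}}_{a,b|x,y}$,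 the assemblage obtained on average from $N$ copies of $\{\sigma^{\mathrm{GGHZ}}_{a,b|x,y}\}$ by the distillation protocol described in the context. Then $$\mathcal F_A\big(\{\sigma^{\mathrm{dist}}_{a,b|x,y}\},\{\sigma^{\mathrm{GHZ}}_{a,b|x,y}\}\big)=\sqrt{1-\tfrac12(1-\sin2\theta)(\cos2\theta)^{N-1}}.$$
   Context: $\sigma_x,\sigma_y,\sigma_z$ are the Pauli matrices in the computational basis. For positive semidefinite $A,B$, $\mathcal F(A,B)=\mathrm{Tr}\big[\sqrt{\sqrt A B\sqrt A}\big]$. For two-sided assemblages $\{\sigma_{a,b|x,y}\}$, $\{\tau_{a,b|x,y}\}$ the assemblage fidelity is $\mathcal F_A=\min_{x,y}\sum_{a,b}\mathcal F(\sigma_{a,b|x,y},\tau_{a,b|x,y})$ (components of zero trace contribute $0$). Distillation protocol (two-sided device-independent setting: Alice and Bob untrusted, Charlie trusted): on each of the first $N-1$ copies Charlie applies the filter with Kraus operators $K_0=\mathrm{diag}(\tan\theta,1)$, $K_1=\mathrm{diag}(\sqrt{1-\tan^2\theta},0)$; outcome $0$ (probability $2\sin^2\theta$ per copy) turns the copy into $\{\sigma^{\mathrm{GHZ}}_{a,b|x,y}\}$; copies with outcome $1$ are discarded and if all fail the untouched $N$-th copy is kept, so the average output is the convex combination $\sigma^{\mathrm{dist}}$ of the claim. *)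

(* Defs.v *)
From HB Require Import structures.
From mathcomp Require Import all_boot all_order all_algebra.
From mathcomp Require Import complex.
From mathcomp Require Import boolp reals trigo.

Set Implicit Arguments.
Unset Strict Implicit.
Unset Printing Implicit Defensive.

Import Order.TTheory GRing.Theory Num.Theory.
Local Open Scope ring_scope.
Local Open Scope complex_scope.
Local Open Scope sesquilinear_scope.

Section QuantumDefs.
Variable R : realType.
Local Notation C := R[i].

Definition pauli (x : 'I_3) : 'M[C]_2 :=
  match val x with
  | 0%N => \matrix_(i, j) (if i == j then 0 else 1)
  | 1%N => \matrix_(i, j) (if i == j then 0
                           else if val i == 0%N then - 'i else 'i)
  | _ => \matrix_(i, j) (if i == j then (if val i == 0%N then 1 else -1)
                         else 0)
  end.

Definition proj (a : 'I_2) (x : 'I_3) : 'M[C]_2 :=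
  (2%:R)^-1 *: (1%:M + ((-1) ^+ a) *: pauli x).

(* Three-qubit space H_A (x) H_B (x) H_C with computational basis indexed
   by triples (i, j, k). Vectors are functions Idx3 -> C, operators are
   functions Idx3 -> Idx3 -> C (matrix entries). *)
Definition Idx3 : finType := ('I_2 * 'I_2 * 'I_2)%type.

Definition ket000_111 (c s : C) (p : Idx3) : C :=
  let '(i, j, k) := p in
  if (val i == 0%N) && (val j == 0%N) && (val k == 0%N) then c
  else if (val i == 1%N) && (val j == 1%N) && (val k == 1%N) then s
  else 0.

Definition psi_GGHZ (theta : R) : Idx3 -> C :=
  ket000_111 (cos theta)%:C (sin theta)%:C.

Definition psi_GHZ : Idx3 -> C :=
  ket000_111 ((Num.sqrt (2 : R))^-1)%:C ((Num.sqrt (2 : R))^-1)%:C.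

Definition dens (psi : Idx3 -> C) : Idx3 -> Idx3 -> C :=
  fun p q => psi p * (psi q)^*.

Definition kron3 (A B D : 'M[C]_2) : Idx3 -> Idx3 -> C :=
  fun p q => let '(i, j, k) := p in let '(i', j', k') := q in
             A i i' * B j j' * D k k'.

Definition opmul (X Y : Idx3 -> Idx3 -> C) : Idx3 -> Idx3 -> C :=
  fun p q => \sum_(r : Idx3) X p r * Y r q.

Definition ptrAB (X : Idx3 -> Idx3 -> C) : 'M[C]_2 :=
  \matrix_(k, l) \sum_(i : 'I_2) \sum_(j : 'I_2) X (i, j, k) (i, j, l).

Definition assemblage := 'I_2 -> 'I_2 -> 'I_3 -> 'I_3 -> 'M[C]_2.

Definition assemblage_of (psi : Idx3 -> C) : assemblage :=
  fun a b x y => ptrAB (opmul (kron3 (proj a x) (proj b y) 1%:M) (dens psi)).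

Definition sigma_GGHZ (theta : R) : assemblage := assemblage_of (psi_GGHZ theta).
Definition sigma_GHZ : assemblage := assemblage_of psi_GHZ.

Definition P_fail (theta : R) (N : nat) : R := (1 - 2 * sin theta ^+ 2) ^+ N.-1.
Definition P_success (theta : R) (N : nat) : R := 1 - P_fail theta N.

Definition sigma_dist (theta : R) (N : nat) : assemblage :=
  fun a b x y => (P_success theta N)%:C *: sigma_GHZ a b x y
               + (P_fail theta N)%:C *: sigma_GGHZ theta a b x y.

Definition psdmx n (A : 'M[C]_n) : Prop :=
  A ^t* = A /\ forall v : 'cV[C]_n, 0 <= (v ^t* *m A *m v) 0 0.

(* the (unique) positive semidefinite square root of a PSD matrix;
   defaults to 0 when no PSD square root exists *)
Definition sqrtmx n (A : 'M[C]_n) : 'M[C]_n :=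
  match pselect (exists S : 'M[C]_n, psdmx S /\ S *m S = A) with
  | left h => proj1_sig (cid h)
  | right _ => 0
  end.

(* F(A, B) = Tr sqrt(sqrt A B sqrt A); the trace of a PSD matrix is real,
   we take its real part to get a value in R *)
Definition fidelity n (A B : 'M[C]_n) : R :=
  complex.Re (\tr (sqrtmx (sqrtmx A *m B *m sqrtmx A))).

(* F_A = min_{x,y} sum_{a,b} F(sigma_{ab|xy}, tau_{ab|xy}),
   zero-trace components contribute 0 *)
Definition fid_term (s t : assemblage) (xy : 'I_3 * 'I_3) : R :=
  \sum_(a : 'I_2) \sum_(b : 'I_2)
    (if (\tr (s a b xy.1 xy.2) == 0) || (\tr (t a b xy.1 xy.2) == 0) then 0
     else fidelity (s a b xy.1 xy.2) (t a b xy.1 xy.2)).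

Definition assemblage_fidelity (s t : assemblage) : R :=
  \big[Num.min/fid_term s t (ord0, ord0)]_(xy : 'I_3 * 'I_3) fid_term s t xy.

End QuantumDefs.

(* Main.v *)
Require Import Defs.
From HB Require Import structures.
From mathcomp Require Import all_boot all_order all_algebra.
From mathcomp Require Import complex.
From mathcomp Require Import boolp reals trigo.
From mathcomp Require Import ring lra.
Import Order.TTheory GRing.Theory Num.Theory.
Set Implicit Arguments.
Unset Strict Implicit.
Local Open Scope ring_scope.
Local Open Scope complex_scope.
Local Open Scope sesquilinear_scope.
Lemma ctM (R : realType) m n p (A : 'M[R[i]]_(m, n)) (B : 'M[R[i]]_(n, p)) :
  (A *m B)^t* = B^t* *m A^t*.
Proof. by rewrite trmx_mul map_mxM. Qed.

Lemma ctZ (R : realType) m n (a : R[i]) (A : 'M[R[i]]_(m, n)) :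
  (a *: A)^t* = (Num.conj a) *: A^t*.
Proof. by rewrite linearZ /= map_mxZ. Qed.

Lemma cTc_entry (R : realType) m n (M : 'M[R[i]]_(m, n)) j :
  (M^t* *m M) j j = \sum_i (M i j) * Num.conj (M i j).
Proof. by rewrite mxE; apply: eq_bigr => i _; rewrite !mxE mulrC. Qed.

Lemma cTc_ge0 (R : realType) m n (M : 'M[R[i]]_(m, n)) j : 0 <= (M^t* *m M) j j.
Proof. by rewrite cTc_entry; apply: sumr_ge0 => i _; apply: mulcJ_ge0. Qed.

Lemma cTc_eq0 (R : realType) m n (M : 'M[R[i]]_(m, n)) :
  (forall j, (M^t* *m M) j j = 0) -> M = 0.
Proof.
move=> H; apply/matrixP => i j; rewrite mxE.
have := H j; rewrite cTc_entry => /psumr_eq0P => /(_ (fun k _ => mulcJ_ge0 _)) /(_ i isT).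
by move/eqP; rewrite mulf_eq0 (conjc_eq0 (M i j)) orbb => /eqP.
Qed.

Lemma conjE (R : realType) (x : R[i]) : Num.conj x = conjc x. Proof. by []. Qed.

Lemma ge0C (R : realType) (x : R[i]) : 0 <= x -> x = (complex.Re x)%:C /\ 0 <= complex.Re x.
Proof.
case: x => a b; rewrite lecE /= => /andP [/eqP -> ha]; split => //.
Qed.

Lemma psd_rank1 (R : realType) n (w : 'cV[R[i]]_n) (k : R) : 0 <= k ->
  psdmx (k%:C *: (w *m w^t*)).
Proof.
move=> k0; split.
  by rewrite ctZ ctM trmxCK conjE conjc_real.
move=> v; rewrite -scalemxAr -scalemxAl mxE.
have -> : v^t* *m (w *m w^t*) *m v = (w^t* *m v)^t* *m (w^t* *m v).
  by rewrite ctM trmxCK !mulmxA.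
by apply: mulr_ge0; [rewrite ler0c | apply: cTc_ge0].
Qed.

Lemma cV_eq0 (R : realType) n (w : 'cV[R[i]]_n) :
  (w^t* *m w) 0 0 = 0 -> w = 0.
Proof. by move=> H; apply: cTc_eq0 => j; rewrite (ord1 j). Qed.

Lemma RC_inv (R : realType) (x : R) : (x^-1)%:C = (x%:C)^-1 :> R[i].
Proof. by rewrite fmorphV. Qed.

Lemma RC_mul (R : realType) (x y : R) : (x * y)%:C = x%:C * y%:C :> R[i].
Proof. by rewrite rmorphM. Qed.

Lemma psd_uniq_rank1 (R : realType) n (w : 'cV[R[i]]_n) (S : 'M[R[i]]_n) :
  psdmx S -> S *m S = w *m w^t* ->
  S = ((Num.sqrt (complex.Re ((w^t* *m w) 0 0)))^-1)%:C *: (w *m w^t*).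
Proof.
set r := complex.Re _ => -[hH hP] hS.
have [zE r0] := ge0C (cTc_ge0 w 0).
have wTw : w^t* *m w = (r%:C)%:M by rewrite [LHS]mx11_scalar zE.
have [rz|rpos] : r = 0 \/ 0 < r.
  by have := r0; rewrite le0r; case/orP => [/eqP h|h]; [left|right].
  have w0 : w = 0 by apply: cV_eq0; rewrite zE -/r rz.
  rewrite w0 mul0mx scaler0 in hS *.
  apply: cTc_eq0 => j; by rewrite hH hS mxE.
have commS : S *m (w *m w^t*) = (w *m w^t*) *m S by rewrite -hS mulmxA.
set mu' := (w^t* *m S *m w) 0 0.
have mu'0 : 0 <= mu' by apply: hP.
have rC0 : r%:C != 0 :> R[i] by rewrite (inj_eq (@complexI _)) gt_eqF.
set mu := mu' / r%:C.
have Sw : S *m w = mu *: w.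
  have := congr1 (fun M => M *m w) commS => /=.
  rewrite -!mulmxA wTw mul_mx_scalar.
  rewrite [w^t* *m (S *m w)]mulmxA [w^t* *m S *m w]mx11_scalar -/mu' mul_mx_scalar.
  move=> /(congr1 (fun M => (r%:C)^-1 *: M)); rewrite -scalemxAr !scalerA mulVf // scale1r => ->.
  by rewrite /mu mulrC.
have mu0 : 0 <= mu by rewrite divr_ge0 // ler0c.
have w0 : w != 0.
  by apply/eqP => w0; move: rpos; rewrite /r w0 mulmx0 mxE /= ltxx.
have mu2 : mu * mu = r%:C.
  have := congr1 (fun M => M *m w) hS => /=.
  rewrite -mulmxA Sw -scalemxAr Sw scalerA -mulmxA wTw mul_mx_scalar.
  move/eqP; rewrite -subr_eq0 -scalerBl scalemx_eq0 (negbTE w0) orbF subr_eq0.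
  by move/eqP.
have [muE m0] := ge0C mu0.
have mE : complex.Re mu = Num.sqrt r.
  have : (complex.Re mu * complex.Re mu)%:C = r%:C :> R[i] by rewrite RC_mul -muE.
  by move/complexI => <-; rewrite -expr2 sqrtr_sqr ger0_norm.
set Q := 1%:M - (r%:C)^-1 *: (w *m w^t*).
have wQ : w^t* *m Q = 0.
  rewrite mulmxBr mulmx1 -scalemxAr mulmxA wTw mul_scalar_mx scalerA mulVf //.
  by rewrite scale1r subrr.
have SQ : S *m Q = 0.
  apply: cTc_eq0 => j.
  rewrite ctM hH -mulmxA [S *m (S *m Q)]mulmxA hS -!mulmxA wQ !mulmx0.
  by rewrite mxE.
have -> : S = S *m Q + (r%:C)^-1 *: (S *m w *m w^t*).
  by rewrite -mulmxA scalemxAr -mulmxDr /Q subrK mulmx1.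
rewrite SQ add0r Sw -scalemxAl scalerA muE mE.
congr (_ *: _).
rewrite -RC_inv -RC_mul; congr (_%:C).
have sr0 : Num.sqrt r != 0 by rewrite sqrtr_eq0 -ltNge.
by rewrite /r -{1}(sqr_sqrtr r0) expr2 invfM divfK.
Qed.

Lemma sqrtmx_spec (R : realType) n (A : 'M[R[i]]_n) :
  (exists S, psdmx S /\ S *m S = A) -> psdmx (sqrtmx A) /\ sqrtmx A *m sqrtmx A = A.
Proof.
move=> h; rewrite /sqrtmx; case: pselect => // h'.
exact: (proj2_sig (cid h')).
Qed.

Lemma sqrtmx_rank1 (R : realType) n (w : 'cV[R[i]]_n) :
  sqrtmx (w *m w^t*) =
  ((Num.sqrt (complex.Re ((w^t* *m w) 0 0)))^-1)%:C *: (w *m w^t*).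
Proof.
suff [h1 h2] : psdmx (sqrtmx (w *m w^t*)) /\ sqrtmx (w *m w^t*) *m sqrtmx (w *m w^t*) = w *m w^t*.
  exact: psd_uniq_rank1.
apply: sqrtmx_spec.
set r := complex.Re ((w^t* *m w) 0 0).
have [zE r0] := ge0C (cTc_ge0 w 0).
exists (((Num.sqrt r)^-1)%:C *: (w *m w^t*)); split.
  by apply: psd_rank1; rewrite invr_ge0 sqrtr_ge0.
rewrite -scalemxAr -scalemxAl scalerA !mulmxA -[w *m w^t* *m w]mulmxA.
rewrite [w^t* *m w]mx11_scalar zE -/r mul_mx_scalar -scalemxAl scalerA.
have [rz|rpos] : r = 0 \/ 0 < r.
  by have := r0; rewrite le0r; case/orP => [/eqP h|h]; [left|right].
  have w0 : w = 0 by apply: cV_eq0; rewrite zE -/r rz.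
  by rewrite w0 mul0mx scaler0.
rewrite -!RC_mul.
have sr0 : Num.sqrt r != 0 by rewrite sqrtr_eq0 -ltNge.
have r0r : 0 <= r := r0.
by rewrite -{3}(sqr_sqrtr r0r) expr2 -invfM mulVf ?mulf_neq0 // scale1r.
Qed.
Lemma sum2 (V : nmodType) (F : 'I_2 -> V) : \sum_(i < 2) F i = F 0 + F 1.
Proof. rewrite big_ord_recl big_ord1; congr (F _ + F _); exact: val_inj. Qed.

Lemma ord2P (i : 'I_2) : i = 0 \/ i = 1.
Proof. by case: i => [[|[|//]]] H; [left|right]; apply: val_inj. Qed.

Lemma mx2P (T : Type) (M N : 'M[T]_2) : M 0 0 = N 0 0 -> M 0 1 = N 0 1 ->
  M 1 0 = N 1 0 -> M 1 1 = N 1 1 -> M = N.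
Proof.
move=> h00 h01 h10 h11; apply/matrixP => i j.
by case: (ord2P i) => ->; case: (ord2P j) => ->.
Qed.

Lemma sumIdx3 (V : nmodType) (F : Idx3 -> V) :
  \sum_(r : Idx3) F r = \sum_(i < 2) \sum_(j < 2) \sum_(k < 2) F (i, j, k).
Proof.
rewrite (pair_bigA _ (fun i j => \sum_(k < 2) F (i, j, k))) /=.
rewrite (pair_bigA _ (fun p k => F (p.1, p.2, k))) /=.
by apply: eq_bigr => -[[i j] k] _.
Qed.

Definition psi2 (R : realType) (c s : R[i]) (k : 'I_2) : R[i] :=
  if val k == 0%N then c else s.

Lemma assemblage_ket (R : realType) (c s : R[i]) a b x y :
  assemblage_of (ket000_111 c s) a b x y =
  \matrix_(k, l) (proj R a x l k * proj R b y l k * psi2 c s k * (psi2 c s l)^*).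
Proof.
rewrite /assemblage_of /ptrAB /opmul.
move: (proj R a x) (proj R b y) => P Q.
apply/matrixP => k l; rewrite !mxE.
rewrite !sum2 !sumIdx3 !sum2 /=.
rewrite /kron3 /dens /psi2 /=.
case: (ord2P k) => ->; case: (ord2P l) => -> /=; rewrite !mxE /=.
all: by rewrite ?conjc0; ring.
Qed.
Lemma psd_add (R : realType) n (A B : 'M[R[i]]_n) : psdmx A -> psdmx B -> psdmx (A + B).
Proof.
move=> [hA pA] [hB pB]; split; first by rewrite linearD /= map_mxD hA hB.
move=> v; rewrite mulmxDr mulmxDl mxE; exact: addr_ge0.
Qed.

Lemma psd_scale (R : realType) n (k : R) (A : 'M[R[i]]_n) : 0 <= k -> psdmx A -> psdmx (k%:C *: A).
Proof.
move=> k0 [hA pA]; split; first by rewrite ctZ hA conjE conjc_real.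
move=> v; rewrite -scalemxAr -scalemxAl mxE; apply: mulr_ge0 => //; by rewrite ler0c.
Qed.

Lemma psd1 (R : realType) n : psdmx (1%:M : 'M[R[i]]_n).
Proof.
split; first by apply/matrixP => i j; rewrite !mxE eq_sym; case: eqP => _; rewrite ?conjE ?conjc1 ?conjc0.
by move=> v; rewrite mulmx1 cTc_ge0.
Qed.

Lemma tr_rank1 (R : realType) n (w : 'cV[R[i]]_n) : \tr (w *m w^t*) = (w^t* *m w) 0 0.
Proof. by rewrite mxtrace_mulC /mxtrace big_ord1. Qed.

Lemma sqrtmx0 (R : realType) n : sqrtmx (0 : 'M[R[i]]_n) = 0.
Proof.
have := sqrtmx_rank1 (0 : 'cV[R[i]]_n).
by rewrite mul0mx scaler0.
Qed.

Lemma fidelity_rank1 (R : realType) n (A : 'M[R[i]]_n) (g : 'cV[R[i]]_n) :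
  (exists S, psdmx S /\ S *m S = A) ->
  fidelity A (g *m g^t*) = Num.sqrt (complex.Re ((g^t* *m A *m g) 0 0)).
Proof.
move=> /sqrtmx_spec [[hH hP] hS].
rewrite /fidelity.
set S := sqrtmx A in hH hP hS *.
have -> : S *m (g *m g^t*) *m S = (S *m g) *m (S *m g)^t*.
  by rewrite ctM hH !mulmxA.
rewrite sqrtmx_rank1 mxtraceZ tr_rank1.
have -> : (S *m g)^t* *m (S *m g) = g^t* *m A *m g.
  by rewrite ctM hH -hS !mulmxA.
have z0 : 0 <= (g^t* *m A *m g) 0 0.
  have -> : g^t* *m A *m g = (S *m g)^t* *m (S *m g) by rewrite ctM hH -hS !mulmxA.
  exact: cTc_ge0.
have [zE zr] := ge0C z0.
rewrite zE -RC_mul /=.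
set r := complex.Re _.
have r0 : 0 <= r := zr.
have [->|rpos] : r = 0 \/ 0 < r.
  by have := r0; rewrite le0r; case/orP => [/eqP h|h]; [left|right].
  by rewrite mulr0 sqrtr0.
have sr0 : Num.sqrt r != 0 by rewrite sqrtr_eq0 -ltNge.
by rewrite -{2}(sqr_sqrtr r0) expr2 mulKf.
Qed.
Lemma CH_uv (R : realType) (u v : 'cV[R[i]]_2) :
 (u *m u^t* + v *m v^t*) *m (u *m u^t* + v *m v^t*) =
 ((u^t* *m u) 0 0 + (v^t* *m v) 0 0) *: (u *m u^t* + v *m v^t*)
 - ((u 0 0 * v 1 0 - u 1 0 * v 0 0) * Num.conj (u 0 0 * v 1 0 - u 1 0 * v 0 0)) *: 1%:M.
Proof.
rewrite !rmorphB !rmorphM /=.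
apply: mx2P; repeat (rewrite !mxE || rewrite (sum2 (fun j => _)) || rewrite (big_ord1 _ (fun j => _))); rewrite /=; ring.
Qed.
Lemma sqrt_exists_uv (R : realType) (u v : 'cV[R[i]]_2) :
  exists S, psdmx S /\ S *m S = u *m u^t* + v *m v^t*.
Proof.
have CH := CH_uv u v.
set A := u *m u^t* + v *m v^t* in CH *.
set δ := u 0 0 * v 1 0 - u 1 0 * v 0 0 in CH.
have [DE D0] := ge0C (mulcJ_ge0 δ).
rewrite conjE DE in CH.
set D := complex.Re _ in CH D0.
have [tE t0] := ge0C (addr_ge0 (cTc_ge0 u 0) (cTc_ge0 v 0)).
rewrite tE in CH.
set t := complex.Re _ in CH t0.
set d := Num.sqrt D.
have d0 : 0 <= d by apply: sqrtr_ge0.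
have dd : d * d = D by rewrite -expr2 sqr_sqrtr.
have [h0|hpos] : t + 2 * d = 0 \/ 0 < t + 2 * d.
  have : 0 <= t + 2 * d by lra.
  by rewrite le0r; case/orP => [/eqP h|h]; [left|right].
  have tz : t = 0 by lra.
  have : (u^t* *m u) 0 0 + (v^t* *m v) 0 0 = 0 by rewrite tE -/t tz.
  move/eqP; rewrite paddr_eq0 ?cTc_ge0 // => /andP [/eqP hu /eqP hv].
  have u0 : u = 0 by apply: cV_eq0.
  have v0 : v = 0 by apply: cV_eq0.
  exists 0; split; last by rewrite /A u0 v0 !mul0mx addr0.
  by have := psd_scale (lexx (0 : R)) (@psd1 R 2); rewrite scale0r.
set k := (Num.sqrt (t + 2 * d))^-1.
have kk : k * k * (t + 2 * d) = 1.
  have h : 0 <= t + 2 * d by lra.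
  by rewrite /k -expr2 exprVn sqr_sqrtr // mulVf // gt_eqF.
exists (k%:C *: (A + d%:C *: 1%:M)); split.
  apply: psd_scale; first by rewrite /k invr_ge0 sqrtr_ge0.
  apply: psd_add; last by apply: psd_scale => //; apply: psd1.
  apply: psd_add.
    by have := psd_rank1 u (@ler01 R); rewrite scale1r.
  by have := psd_rank1 v (@ler01 R); rewrite scale1r.
clearbody A; rewrite -scalemxAl -scalemxAr scalerA scalemx1 mulmxDl !mulmxDr CH.
rewrite mul_mx_scalar !mul_scalar_mx.
apply/matrixP => i j; rewrite !mxE.
transitivity ((k * k * (t + 2 * d))%:C * A i j + (k * k * (d * d - D))%:C * (i == j)%:R).
  rewrite !rmorphM !rmorphD ?rmorphB ?rmorphN !rmorphM ?rmorph_nat /= -mulr_natr. ring.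
by rewrite kk dd subrr mulr0 mul0r addr0 mul1r.
Qed.
Definition r2 (R : realType) : R := (Num.sqrt 2)^-1.
Lemma r2sq (R : realType) : r2 R * r2 R = 2^-1.
Proof. by rewrite /r2 -invfM -expr2 sqr_sqrtr // ler0n. Qed.

Definition ev (R : realType) (a : 'I_2) (x : 'I_3) : 'cV[R[i]]_2 :=
  match val x with
  | 0%N => \col_k (if val k == 0%N then (r2 R)%:C else ((-1) ^+ a * r2 R)%:C)
  | 1%N => \col_k (if val k == 0%N then (r2 R)%:C else 'i * ((-1) ^+ a * r2 R)%:C)
  | _ => \col_k (if val k == val a then 1 else 0)
  end.

Lemma inv2C (R : realType) : (2%:R : R[i])^-1 = ((2 : R)^-1)%:C.
Proof. by rewrite RC_inv rmorph_nat. Qed.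

Ltac ceq R := rewrite ?inv2C; apply/eqP; rewrite eq_complex /=; apply/andP; split; apply/eqP;
  have := r2sq R; lra.

Lemma proj_ev (R : realType) a x : proj R a x = ev R a x *m (ev R a x)^t*.
Proof.
case: x => [[|[|[|//]]] Hx]; case: a => [[|[|//]] Ha];
rewrite /proj /ev /pauli /=; apply: mx2P;
rewrite !mxE big_ord1 !mxE /= ?expr0 ?expr1.
all: ceq R.
Qed.

Definition mvec (R : realType) (c s : R[i]) a b x y : 'cV[R[i]]_2 :=
  \col_k (psi2 c s k * Num.conj (ev R a x k 0) * Num.conj (ev R b y k 0)).

Lemma assemblage_mvec (R : realType) (c s : R[i]) a b x y :
  assemblage_of (ket000_111 c s) a b x y = mvec c s a b x y *m (mvec c s a b x y)^t*.
Proof.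
rewrite assemblage_ket !proj_ev; apply/matrixP => k l; rewrite !mxE !big_ord1 !mxE.
rewrite !rmorphM /= !conjCK; ring.
Qed.

Definition nr (R : realType) (a : 'I_2) (x : 'I_3) (k : 'I_2) : R :=
  match val x with
  | 0%N | 1%N => 2^-1
  | _ => if val k == val a then 1 else 0
  end.

Lemma ev_norm (R : realType) a x k :
  (nr R a x k)%:C = ev R a x k 0 * Num.conj (ev R a x k 0).
Proof.
case: x => [[|[|[|//]]] Hx]; case: a => [[|[|//]] Ha]; case: (ord2P k) => ->;
rewrite /nr /ev /= !mxE /= ?expr0 ?expr1; ceq R.
Qed.

Lemma conjR (R : realType) (x : R) : Num.conj (x%:C) = x%:C :> R[i].
Proof. exact: conjc_real. Qed.

Lemma RC_add (R : realType) (x y : R) : (x + y)%:C = x%:C + y%:C :> R[i].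
Proof. by rewrite rmorphD. Qed.

Lemma mvec_inner (R : realType) (c1 s1 c2 s2 : R) a b x y :
  ((mvec c1%:C s1%:C a b x y)^t* *m mvec c2%:C s2%:C a b x y) 0 0 =
  (c1 * c2 * (nr R a x 0 * nr R b y 0) + s1 * s2 * (nr R a x 1 * nr R b y 1))%:C.
Proof.
rewrite mxE (sum2 (fun j => _)) !mxE /psi2 /=.
rewrite !RC_add !RC_mul !ev_norm !rmorphM /= !conjCK !conjR.
ring.
Qed.
Lemma if_term (R : realType) (u v g : 'cV[R[i]]_2) :
  (if (\tr (u *m u^t* + v *m v^t*) == 0) || (\tr (g *m g^t*) == 0) then 0
   else fidelity (u *m u^t* + v *m v^t*) (g *m g^t*)) =
  Num.sqrt (complex.Re ((g^t* *m (u *m u^t* + v *m v^t*) *m g) 0 0)).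
Proof.
case: ifP => [/orP H|_]; last by apply: fidelity_rank1; apply: sqrt_exists_uv.
case: H; rewrite ?mxtraceD !tr_rank1.
  rewrite paddr_eq0 ?cTc_ge0 // => /andP [/eqP hu /eqP hv].
  by rewrite (cV_eq0 hu) (cV_eq0 hv) !mul0mx addr0 mulmx0 mul0mx mxE /= sqrtr0.
move=> /eqP hg; rewrite (cV_eq0 hg).
by rewrite mulmx0 mxE /= sqrtr0.
Qed.

Lemma quad_uvg (R : realType) (g h : 'cV[R[i]]_2) (p f : R[i]) :
  (g^t* *m (p *: (g *m g^t*) + f *: (h *m h^t*)) *m g) 0 0 =
  p * ((g^t* *m g) 0 0 * (g^t* *m g) 0 0) + f * ((g^t* *m h) 0 0 * (h^t* *m g) 0 0).
Proof.
rewrite mulmxDr mulmxDl -!scalemxAr -!scalemxAl mxE [in X in _ + X]mxE mxE.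
have -> : g^t* *m (g *m g^t*) *m g = (g^t* *m g) *m (g^t* *m g) by rewrite !mulmxA.
have -> : g^t* *m (h *m h^t*) *m g = (g^t* *m h) *m (h^t* *m g) by rewrite !mulmxA.
by rewrite [((g^t* *m g) *m _) 0 0]mxE [((g^t* *m h) *m _) 0 0]mxE !big_ord1.
Qed.

Lemma rank1_scale (R : realType) (k : R) (g : 'cV[R[i]]_2) : 0 <= k ->
  k%:C *: (g *m g^t*) = ((Num.sqrt k)%:C *: g) *m ((Num.sqrt k)%:C *: g)^t*.
Proof.
move=> k0; rewrite ctZ conjR -scalemxAl -scalemxAr scalerA -RC_mul.
by rewrite -expr2 sqr_sqrtr.
Qed.
Definition Fq (R : realType) (P F c s q0 q1 : R) : R :=
  Num.sqrt (P * ((q0 + q1) / 2) ^+ 2 + F * (c * q0 + s * q1) ^+ 2 / 2).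

Lemma summand (R : realType) (θ : R) N a b x y :
  0 <= P_success θ N -> 0 <= P_fail θ N ->
 (if (\tr (sigma_dist θ N a b x y) == 0) || (\tr (sigma_GHZ R a b x y) == 0) then 0
  else fidelity (sigma_dist θ N a b x y) (sigma_GHZ R a b x y)) =
 Fq (P_success θ N) (P_fail θ N) (cos θ) (sin θ)
    (nr R a x 0 * nr R b y 0) (nr R a x 1 * nr R b y 1).
Proof.
move=> hp hf.
set g := mvec (r2 R)%:C (r2 R)%:C a b x y.
set h := mvec (cos θ)%:C (sin θ)%:C a b x y.
have EG : sigma_GHZ R a b x y = g *m g^t*.
  by rewrite /sigma_GHZ /psi_GHZ assemblage_mvec.
have EH : sigma_GGHZ θ a b x y = h *m h^t*.
  by rewrite /sigma_GGHZ /psi_GGHZ assemblage_mvec.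
have ED : sigma_dist θ N a b x y =
    (P_success θ N)%:C *: (g *m g^t*) + (P_fail θ N)%:C *: (h *m h^t*).
  by rewrite /sigma_dist EG EH.
rewrite ED EG (rank1_scale _ hp) (rank1_scale _ hf) if_term -!rank1_scale //.
rewrite quad_uvg !mvec_inner -!RC_mul -!RC_add /= /Fq.
congr (Num.sqrt _).
set q0 := nr R a x 0 * nr R b y 0.
set q1 := nr R a x 1 * nr R b y 1.
set P := P_success θ N; set F := P_fail θ N.
transitivity (P * ((r2 R * r2 R) * (q0 + q1)) ^+ 2 + F * (r2 R * r2 R) * (cos θ * q0 + sin θ * q1) ^+ 2).
  ring.
by rewrite r2sq; field.
Qed.
Lemma fid_term_eq (R : realType) (θ : R) N x y :
  0 <= P_success θ N -> 0 <= P_fail θ N ->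
  fid_term (sigma_dist θ N) (sigma_GHZ R) (x, y) =
  \sum_(a < 2) \sum_(b < 2) Fq (P_success θ N) (P_fail θ N) (cos θ) (sin θ)
    (nr R a x 0 * nr R b y 0) (nr R a x 1 * nr R b y 1).
Proof.
move=> hp hf; rewrite /fid_term; apply: eq_bigr => a _; apply: eq_bigr => b _.
exact: summand.
Qed.

Lemma Fq_scale (R : realType) (P F c s t q0 q1 : R) : 0 <= t ->
  Fq P F c s (t * q0) (t * q1) = t * Fq P F c s q0 q1.
Proof.
move=> t0; rewrite /Fq.
have -> : P * ((t * q0 + t * q1) / 2) ^+ 2 + F * (c * (t * q0) + s * (t * q1)) ^+ 2 / 2
  = t ^+ 2 * (P * ((q0 + q1) / 2) ^+ 2 + F * (c * q0 + s * q1) ^+ 2 / 2) by ring.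
by rewrite sqrtrM ?sqr_ge0 // sqrtr_sqr ger0_norm.
Qed.

Lemma Fq00 (R : realType) (P F c s : R) : Fq P F c s 0 0 = 0.
Proof. by rewrite /Fq !(mulr0, addr0, mul0r, expr0n) /= sqrtr0. Qed.

Lemma Fq_ge0 (R : realType) (P F c s q0 q1 : R) : 0 <= Fq P F c s q0 q1.
Proof. exact: sqrtr_ge0. Qed.

Lemma Fq_ineq (R : realType) (P F c s : R) : 0 <= P -> 0 <= F ->
  Fq P F c s (2^-1 * 2^-1) (2^-1 * 2^-1) *+ 4 <= Fq P F c s 1 0 + Fq P F c s 0 1.
Proof.
move=> hP hF; rewrite /Fq.
set A := _ + _ * (c * 1 + s * 0) ^+ 2 / 2.
set B := _ + _ * (c * 0 + s * 1) ^+ 2 / 2.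
set X := _ + _ * (c * (2^-1 * 2^-1) + s * (2^-1 * 2^-1)) ^+ 2 / 2.
have A0 : 0 <= A by rewrite /A; apply: addr_ge0; [apply: mulr_ge0 => //; apply: sqr_ge0 | apply: divr_ge0 => //; apply: mulr_ge0 => //; apply: sqr_ge0].
have B0 : 0 <= B by rewrite /B; apply: addr_ge0; [apply: mulr_ge0 => //; apply: sqr_ge0 | apply: divr_ge0 => //; apply: mulr_ge0 => //; apply: sqr_ge0].
have X0 : 0 <= X by rewrite /X; apply: addr_ge0; [apply: mulr_ge0 => //; apply: sqr_ge0 | apply: divr_ge0 => //; apply: mulr_ge0 => //; apply: sqr_ge0].
have sA := sqrtr_ge0 A; have sB := sqrtr_ge0 B.
have key : P / 2 + F * c * s <= 2 * (Num.sqrt A * Num.sqrt B).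
  have s4 : Num.sqrt 4 = 2 :> R.
    by rewrite (_ : (4:R) = 2 ^+ 2) ?sqrtr_sqr ?ger0_norm // expr2 -natrM.
  rewrite -sqrtrM // -[X in _ <= X * _]s4 -sqrtrM ?ler0n //.
  apply: le_trans (ler_norm _) _.
  rewrite -sqrtr_sqr ler_sqrt; last by apply: mulr_ge0 => //; apply: mulr_ge0.
  rewrite /A /B.
  have h : 0 <= P * F * (c - s) ^+ 2 by apply: mulr_ge0; [apply: mulr_ge0|apply: sqr_ge0].
  rewrite -subr_ge0.
  have -> : 4 * ((P * ((1 + 0) / 2) ^+ 2 + F * (c * 1 + s * 0) ^+ 2 / 2) *
    (P * ((0 + 1) / 2) ^+ 2 + F * (c * 0 + s * 1) ^+ 2 / 2)) - (P / 2 + F * c * s) ^+ 2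
    = P * F * (c - s) ^+ 2 / 2 by field.
  by apply: divr_ge0.
have -> : Num.sqrt X *+ 4 = Num.sqrt (X * 16).
  rewrite sqrtrM // (_ : (16:R) = 4 ^+ 2) ?sqrtr_sqr ?ger0_norm //; last by rewrite expr2 -natrM.
  by rewrite mulr_natr.
rewrite -(ger0_norm (addr_ge0 sA sB)) -sqrtr_sqr ler_sqrt ?sqr_ge0 //.
rewrite sqrrD !sqr_sqrtr //.
rewrite -[_ *+ 2]mulr_natr.
have -> : X * 16 = A + B + (P / 2 + F * c * s) by rewrite /X /A /B; field.
move: key; set m := Num.sqrt A * Num.sqrt B; set w := P / 2 + F * c * s.
lra.
Qed.
Local Close Scope complex_scope.
Local Close Scope sesquilinear_scope.

Theorem theorem2 (R : realType) (theta : R) (N : nat) :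
  0 < theta -> theta < pi / 4%:R -> (2 <= N)%N ->
  assemblage_fidelity (sigma_dist theta N) (@sigma_GHZ R) =
  Num.sqrt (1 - 2%:R^-1 * (1 - sin (2%:R * theta)) * cos (2%:R * theta) ^+ N.-1).
Proof.
move=> h0 h1 hN.
have c2 : cos (2%:R * theta) = 1 - 2 * sin theta ^+ 2.
  by rewrite mulr_natl mulr2n cosD -!expr2 cos2sin2; ring.
have s2 : sin (2%:R * theta) = 2 * sin theta * cos theta.
  by rewrite mulr_natl mulr2n sinD; ring.
have pi0 := @pi_gt0 R.
have cpos : 0 <= cos (2%:R * theta).
  apply: cos_ge0_pihalf; apply/andP; split; lra.
have Fdef : P_fail theta N = cos (2%:R * theta) ^+ N.-1 by rewrite /P_fail c2.
have F0 : 0 <= P_fail theta N by rewrite Fdef exprn_ge0.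
have F1 : P_fail theta N <= 1 by rewrite Fdef exprn_ile1 // cos_le1.
have P0 : 0 <= P_success theta N by rewrite /P_success subr_ge0.
set P := P_success theta N in P0 *.
set F := P_fail theta N in F0 F1 Fdef *.
set V := 4 * Fq P F (cos theta) (sin theta) (2^-1 * 2^-1) (2^-1 * 2^-1).
have ineq : V <= Fq P F (cos theta) (sin theta) 1 0 + Fq P F (cos theta) (sin theta) 0 1.
  by rewrite /V mulr_natl; apply: Fq_ineq.
have ineqV : 4 * Fq P F (cos theta) (sin theta) (2^-1 * 2^-1) (2^-1 * 2^-1) <= Fq P F (cos theta) (sin theta) 1 0 + Fq P F (cos theta) (sin theta) 0 1 := ineq.
have H1 : Fq P F (cos theta) (sin theta) (2^-1) 0 = 2^-1 * Fq P F (cos theta) (sin theta) 1 0.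
  by rewrite -Fq_scale ?mulr1 ?mulr0 // invr_ge0 ler0n.
have H2 : Fq P F (cos theta) (sin theta) 0 (2^-1) = 2^-1 * Fq P F (cos theta) (sin theta) 0 1.
  by rewrite -Fq_scale ?mulr1 ?mulr0 // invr_ge0 ler0n.
have G1 := Fq_ge0 P F (cos theta) (sin theta) 1 0.
have G2 := Fq_ge0 P F (cos theta) (sin theta) 0 1.
have E00 : fid_term (sigma_dist theta N) (@sigma_GHZ R) (ord0, ord0) = V.
  rewrite fid_term_eq // !(sum2 (fun j => _)) /nr /= /V; lra.
have Eall : forall xy, V <= fid_term (sigma_dist theta N) (@sigma_GHZ R) xy.
  case=> x y; rewrite fid_term_eq //.
  case: x => [[|[|[|//]]] Hx]; case: y => [[|[|[|//]]] Hy];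
  rewrite !(sum2 (fun j => _)) /nr /= -/P -/F ?mulr1 ?mul1r ?mulr0 ?mul0r ?Fq00 ?H1 ?H2 /V; lra.
have AV : assemblage_fidelity (sigma_dist theta N) (@sigma_GHZ R) = V.
  rewrite /assemblage_fidelity E00.
  apply/le_anti/andP; split; first exact: bigmin_le_id.
  by apply/bigmin_geP; split => // i _; exact: Eall.
rewrite AV /V /Fq -Fdef s2.
have s16 : Num.sqrt 16 = 4 :> R.
  by rewrite (_ : (16:R) = 4 ^+ 2) ?sqrtr_sqr ?ger0_norm //; rewrite expr2 -natrM.
rewrite -[X in X * _]s16 -sqrtrM ?ler0n //; congr (Num.sqrt _).
rewrite /P /P_success -/F.
have cs := cos2Dsin2 theta.
transitivity (1 - F + F * (cos theta ^+ 2 + sin theta ^+ 2 + 2 * sin theta * cos theta) / 2).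
  by field.
by rewrite cs; field.
Qed.
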